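(* A countable group $G$ (with a proper left invariant metric) is locally finite if and only if $G$ is of flat growth, i.e. $G$ is of growth type at most a constant function.
   Context: A proper left invariant metric is $d(g,h)=\|g^{-1}h\|$ for a proper norm (zero only at identity, symmetric, subadditive, finite balls). A group is locally finite if every finitely generated subgroup is finite. An $s$-scale chain of length $m$ from $x$ to $y$ is $x=x_0,\dots,x_m=y$ with $d(x_i,x_{i+1})<s$; $A_g^{(n,s)}$ is the set of $h$ joined to $g$ by an $s$-scale chain of length $n$, and $gr_{(s,g)}(n)=\#A_g^{(n,s)}$. $u\preceq v$ means there is $C>0$ with $u(x)\le Cv(Cx)$ for large $x$. $G$ is of growth type at most $f$ if $gr_{(s,g)}\preceq f$ for all $g\in G$, $s>0$. *)

(* Defs.v *)
From HB Require Import structures.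
From mathcomp Require Import all_boot all_order all_algebra.
From mathcomp Require Import finmap all_classical all_reals.
Set Implicit Arguments. Unset Strict Implicit. Unset Printing Implicit Defensive.
Import Order.TTheory GRing.Theory Num.Theory.
Local Open Scope classical_set_scope.
Local Open Scope ring_scope.

Definition is_group (G : Type) (mul : G -> G -> G) (inv : G -> G) (one : G) : Prop :=
  [/\ (forall x y z, mul x (mul y z) = mul (mul x y) z),
      (forall x, mul one x = x), (forall x, mul x one = x),
      (forall x, mul (inv x) x = one) & (forall x, mul x (inv x) = one)].

Definition is_proper_norm (R : realType) (G : Type) (mul : G -> G -> G)
    (inv : G -> G) (one : G) (nrm : G -> R) : Prop :=
  [/\ (forall g, 0 <= nrm g), (forall g, nrm g = 0 <-> g = one),
      (forall g, nrm (inv g) = nrm g),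
      (forall g h, nrm (mul g h) <= nrm g + nrm h) &
      (forall r : R, finite_set [set g | nrm g <= r])].

Definition dist (R : realType) (G : Type) (mul : G -> G -> G) (inv : G -> G)
    (nrm : G -> R) (g h : G) : R := nrm (mul (inv g) h).

Definition gen_subgroup (G : eqType) (mul : G -> G -> G) (inv : G -> G) (one : G)
    (S : seq G) : set G :=
  [set x | forall H : set G,
     (forall s, s \in (S : seq G) -> H s) -> H one ->
     (forall a b, H a -> H b -> H (mul a b)) ->
     (forall a, H a -> H (inv a)) -> H x].

Definition locally_finite (G : eqType) (mul : G -> G -> G) (inv : G -> G) (one : G)
  : Prop :=
  forall S : seq G, finite_set (gen_subgroup mul inv one S).

Definition chain_set (R : realType) (G : Type) (mul : G -> G -> G) (inv : G -> G)
    (nrm : G -> R) (s : R) (g : G) (n : nat) : set G :=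
  [set h | exists x : nat -> G, [/\ x 0%N = g, x n = h &
           forall i, (i < n)%N -> dist mul inv nrm (x i) (x i.+1) < s]].

(* gr_{(s,g)}(n) = #A_g^{(n,s)} (these sets are finite since balls are finite). *)
Definition growth_fun (R : realType) (G : countType) (mul : G -> G -> G)
    (inv : G -> G) (nrm : G -> R) (s : R) (g : G) (n : nat) : nat :=
  #|` fset_set (chain_set mul inv nrm s g n)|.

Definition growth_le (R : realType) (u : nat -> R) (v : R -> R) : Prop :=
  exists2 C : R, 0 < C & exists N : nat, forall n : nat, (N <= n)%N ->
    u n <= C * v (C * n%:R).

Definition growth_type_at_most (R : realType) (G : countType) (mul : G -> G -> G)
    (inv : G -> G) (nrm : G -> R) (f : R -> R) : Prop :=
  forall (g : G) (s : R), 0 < s ->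
    growth_le (fun n => (growth_fun mul inv nrm s g n)%:R) f.

Definition flat_growth (R : realType) (G : countType) (mul : G -> G -> G)
    (inv : G -> G) (nrm : G -> R) : Prop :=
  exists c : R, growth_type_at_most mul inv nrm (fun _ => c).

(* Main.v *)
Require Import Defs.
From HB Require Import structures.
From mathcomp Require Import all_boot all_order all_algebra.
From mathcomp Require Import finmap all_classical all_reals.
Set Implicit Arguments. Unset Strict Implicit. Unset Printing Implicit Defensive.
Import Order.TTheory GRing.Theory Num.Theory.
Local Open Scope classical_set_scope.
Local Open Scope ring_scope.

Lemma chain_snoc (R : realType) (G : Type) (mul : G -> G -> G) (inv : G -> G)
  (nrm : G -> R) s g n h' h :
  chain_set mul inv nrm s g n h' -> dist mul inv nrm h' h < s ->
  chain_set mul inv nrm s g n.+1 h.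
Proof.
move=> [x [x0 xn xs]] d.
exists (fun i => if (i <= n)%N then x i else h); split => /=.
- by [].
- by rewrite ltnn.
move=> i; rewrite ltnS => le; case: (ltngtP i n) le => // [lt _|-> _].
  by apply: xs.
by rewrite ?leqnn ?ltnn xn.
Qed.

Lemma chain_last (R : realType) (G : Type) (mul : G -> G -> G) (inv : G -> G)
  (nrm : G -> R) s g n h :
  chain_set mul inv nrm s g n.+1 h ->
  exists h', chain_set mul inv nrm s g n h' /\ dist mul inv nrm h' h < s.
Proof.
move=> [x [x0 xn xs]]; exists (x n); split.
  by exists x; split => // i lt; apply: xs; rewrite ltnS ltnW.
by rewrite -xn; apply: xs.
Qed.

Lemma chain0 (R : realType) (G : Type) (mul : G -> G -> G) (inv : G -> G)
  (nrm : G -> R) s g h :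
  chain_set mul inv nrm s g 0 h -> h = g.
Proof. by move=> [x [x0 xn _]]; rewrite -xn. Qed.

Lemma chain0' (R : realType) (G : Type) (mul : G -> G -> G) (inv : G -> G)
  (nrm : G -> R) s g :
  chain_set mul inv nrm s g 0 g.
Proof. by exists (fun _ => g); split. Qed.

Section Grp.
Lemma g_inv_one (G : Type) (mul : G -> G -> G) (inv : G -> G) (one : G) :
  is_group mul inv one -> inv one = one.
Proof. by case=> _ _ h3 h4 _; rewrite -[LHS]h3 h4. Qed.

Lemma g_mulKg (G : Type) (mul : G -> G -> G) (inv : G -> G) (one : G) :
  is_group mul inv one -> forall a b, mul (inv a) (mul a b) = b.
Proof. by case=> h1 h2 _ h4 _ a b; rewrite h1 h4 h2. Qed.

Lemma g_mulKVg (G : Type) (mul : G -> G -> G) (inv : G -> G) (one : G) :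
  is_group mul inv one -> forall a b, mul a (mul (inv a) b) = b.
Proof. by case=> h1 h2 _ _ h5 a b; rewrite h1 h5 h2. Qed.

Lemma g_invM (G : Type) (mul : G -> G -> G) (inv : G -> G) (one : G) :
  is_group mul inv one -> forall a b, inv (mul a b) = mul (inv b) (inv a).
Proof.
move=> hG; have [h1 h2 h3 h4 h5] := hG => a b.
have e : mul (mul a b) (mul (inv b) (inv a)) = one.
  by rewrite -h1 (g_mulKVg hG) h5.
by rewrite -[LHS]h3 -e h1 h4 h2.
Qed.

Lemma g_invK (G : Type) (mul : G -> G -> G) (inv : G -> G) (one : G) :
  is_group mul inv one -> forall a, inv (inv a) = a.
Proof.
move=> hG; have [h1 h2 h3 h4 h5] := hG => a.
by rewrite -[LHS]h3 -(h4 a) h1 h4 h2.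
Qed.
End Grp.

Lemma W_step (R : realType) (G : Type) (mul : G -> G -> G) (inv : G -> G)
  (one : G) (nrm : G -> R) s g n a t : is_group mul inv one ->
  chain_set mul inv nrm s g n a -> nrm t < s ->
  chain_set mul inv nrm s g n.+1 (mul a t).
Proof.
move=> hG ca nt; apply: chain_snoc ca _.
by rewrite /dist (g_mulKg hG).
Qed.

Lemma W_mon (R : realType) (G : Type) (mul : G -> G -> G) (inv : G -> G)
  (one : G) (nrm : G -> R) s g n m a : is_group mul inv one ->
  is_proper_norm mul inv one nrm -> 0 < s -> (n <= m)%N ->
  chain_set mul inv nrm s g n a -> chain_set mul inv nrm s g m a.
Proof.
move=> hG [_ n0 _ _ _] s0; elim: m => [|m IH]; first by rewrite leqn0 => /eqP ->.
rewrite leq_eqVlt => /orP[/eqP -> //|]; rewrite ltnS => /IH {}IH /IH ca.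
have [_ _ h3 _ _] := hG; rewrite -(h3 a); apply: (W_step hG) => //.
by have [_ ->] := n0 one.
Qed.

Lemma W_mul (R : realType) (G : Type) (mul : G -> G -> G) (inv : G -> G)
  (one : G) (nrm : G -> R) s n m a b : is_group mul inv one ->
  chain_set mul inv nrm s one n a -> chain_set mul inv nrm s one m b ->
  chain_set mul inv nrm s one (n + m) (mul a b).
Proof.
move=> hG ca; elim: m b => [|m IH] b.
  by move=> H; rewrite (chain0 H); have [_ _ h3 _ _] := hG; rewrite (h3 a) addn0.
move=> H; have [b' [cb' d]] := chain_last H.
have eb : b = mul b' (mul (inv b') b) by rewrite (g_mulKVg hG).
rewrite eb; have [h1 _ _ _ _] := hG; rewrite h1 addnS.
by apply: (W_step hG) => //; apply: IH.
Qed.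

Lemma W_inv (R : realType) (G : Type) (mul : G -> G -> G) (inv : G -> G)
  (one : G) (nrm : G -> R) s n a : is_group mul inv one ->
  is_proper_norm mul inv one nrm ->
  chain_set mul inv nrm s one n a -> exists m, chain_set mul inv nrm s one m (inv a).
Proof.
move=> hG [_ _ ninv _ _]; elim: n a => [|n IH] a.
  by move=> H; rewrite (chain0 H); exists 0%N; rewrite (g_inv_one hG); apply: chain0'.
move=> H; have [a' [ca' d]] := chain_last H; have [m cm] := IH _ ca'.
have [h1 h2 h3 h4 h5] := hG.
have e : inv a = mul (mul (inv a) a') (inv a') by rewrite -h1 h5 h3.
have c1 : chain_set mul inv nrm s one 1 (mul (inv a) a').
  rewrite -[mul (inv a) a']h2; apply: (W_step hG) => //; first exact: chain0'.
  by rewrite -ninv (g_invM hG) (g_invK hG).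
by exists (1 + m)%N; rewrite e; apply: W_mul.
Qed.

Lemma W_fin (R : realType) (G : Type) (mul : G -> G -> G) (inv : G -> G)
  (one : G) (nrm : G -> R) s g n : is_group mul inv one ->
  is_proper_norm mul inv one nrm ->
  finite_set (chain_set mul inv nrm s g n).
Proof.
move=> hG [_ _ _ _ fb]; elim: n => [|n IH].
  apply: (sub_finite_set (B := [set g])); last exact: finite_set1.
  by move=> h H; rewrite (chain0 H).
apply: (sub_finite_set (B := [set mul x y | x in chain_set mul inv nrm s g n
   & y in [set t | nrm t <= s]])); last exact: finite_image2.
move=> h H; have [h' [ch' d]] := chain_last H; exists h' => //; exists (mul (inv h') h).
  by rewrite /= ltW.
by rewrite (g_mulKVg hG).
Qed.

Lemma gen_one (G : eqType) (mul : G -> G -> G) (inv : G -> G) (one : G) S :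
  gen_subgroup mul inv one S one.
Proof. by rewrite /gen_subgroup /= => H _ h1 _ _. Qed.

Lemma gen_mul (G : eqType) (mul : G -> G -> G) (inv : G -> G) (one : G) S a b :
  gen_subgroup mul inv one S a -> gen_subgroup mul inv one S b ->
  gen_subgroup mul inv one S (mul a b).
Proof. move=> ga gb; rewrite /gen_subgroup /= in ga gb *; move=> H hS h1 hm hi; apply: (hm); [exact: (ga H hS h1 hm hi)|exact: (gb H hS h1 hm hi)]. Qed.

Lemma gen_S (G : eqType) (mul : G -> G -> G) (inv : G -> G) (one : G) S a :
  a \in S -> gen_subgroup mul inv one S a.
Proof. by rewrite /gen_subgroup /= => aS H hS _ _ _; apply: hS. Qed.

Lemma sum_ge (R : realType) (G : eqType) (nrm : G -> R) (S : seq G) t :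
  (forall g, 0 <= nrm g) -> t \in S -> nrm t <= \sum_(u <- S) nrm u.
Proof.
move=> n0; elim: S => [//|u S IH]; rewrite in_cons big_cons => /orP[/eqP ->|tS].
  by rewrite lerDl sumr_ge0.
by rewrite (le_trans (IH tS)) // lerDr.
Qed.

Lemma seq_bound (R : realType) (G : eqType) (mul : G -> G -> G) (inv : G -> G)
  (one : G) (nrm : G -> R) s N (l : seq G) : is_group mul inv one ->
  is_proper_norm mul inv one nrm -> 0 < s ->
  (forall x, x \in l -> exists n, chain_set mul inv nrm s one n x) ->
  exists m, (N <= m)%N /\ forall x, x \in l -> chain_set mul inv nrm s one m x.
Proof.
move=> hG hN s0; elim: l => [|y l IH] H; first by exists N.
have [m [Nm Hm]] := IH (fun x lx => H x (ltac:(by rewrite in_cons lx orbT))).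
have [k ck] := H y (mem_head y l).
exists (maxn m k); split; first by rewrite (leq_trans Nm) // leq_maxl.
move=> x; rewrite in_cons => /orP[/eqP ->|lx].
  by apply: (W_mon hG hN s0 _ ck); rewrite leq_maxr.
by apply: (W_mon hG hN s0 _ (Hm x lx)); rewrite leq_maxl.
Qed.

From mathcomp Require Import lra.
Import Num.Def.

Theorem mainTheorem18 (R : realType) (G : countType)
    (mul : G -> G -> G) (inv : G -> G) (one : G) (nrm : G -> R) :
  is_group mul inv one ->
  is_proper_norm mul inv one nrm ->
  (locally_finite mul inv one <-> flat_growth mul inv nrm).
Proof.
move=> hG hN; have [n0 nz ninv ntri fb] := hN.
have [h1 h2 h3 h4 h5] := hG.
split.
- move=> lf; exists 1 => g s s0.
  pose ball := [set t | nrm t < s].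
  have fball : finite_set ball.
    by apply: (sub_finite_set (B:=[set t | nrm t <= s])) (fb s) => t /= /ltW.
  pose S := (fset_set ball : seq G).
  pose H := gen_subgroup mul inv one S.
  have fH : finite_set H := lf S.
  pose K := #|` fset_set (mul g @` H)|.
  have sub : forall n, chain_set mul inv nrm s g n `<=` mul g @` H.
    elim => [|n IH] h Hh.
      rewrite (chain0 Hh); exists one; [exact: gen_one| exact: h3].
    have [h' [ch' d]] := chain_last Hh.
    have [k Hk ek] := IH _ ch'.
    exists (mul k (mul (inv (mul g k)) h)).
      apply: gen_mul Hk _; apply: gen_S; rewrite ek.
      have : mul (inv h') h \in fset_set ball by rewrite in_fset_set // inE.
      by [].
    by rewrite h1 (g_mulKVg hG).
  exists (K%:R + 1); first by have := ler0n R K; lra.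
  exists 0%N => n _; rewrite mulr1.
  apply: (le_trans (y := K%:R)); last by lra.
  rewrite ler_nat /growth_fun /K; apply: fsubset_leq_card.
  have fi : finite_set (mul g @` H) by exact: finite_image.
  by rewrite -fset_set_sub //; exact: (sub_finite_set (sub n) fi).
- move=> [c fg] S.
  pose s := 1 + \sum_(u <- S) nrm u.
  have sge : 0 <= \sum_(u <- S) nrm u by rewrite sumr_ge0.
  have s0 : 0 < s by rewrite /s; lra.
  have [C C0 [N HN]] := fg one s s0.
  pose U := [set x | exists n, chain_set mul inv nrm s one n x].
  have gU : gen_subgroup mul inv one S `<=` U.
    move=> x gx; apply: gx.
    - move=> t tS; exists 1%N; rewrite -[t]h2.
      apply: (W_step hG (chain0' mul inv nrm s one)).
      have := sum_ge n0 tS; rewrite /s; lra.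
    - by exists 0%N; apply: chain0'.
    - by move=> a b [n ca] [m cb]; exists (n + m)%N; apply: W_mul.
    - by move=> a [n ca]; apply: W_inv hG hN ca.
  have [//|inf] := pselect (finite_set (gen_subgroup mul inv one S)).
  exfalso.
  have [B BS cB] := infinite_set_fset (truncn (C * c)).+1 inf.
  have [m [Nm Hm]] := (@seq_bound R G mul inv one nrm s N B hG hN s0)
    (fun x xB => gU x (BS x xB)).
  have := HN m Nm => /=.
  have : (#|` B| <= growth_fun mul inv nrm s one m)%N.
    apply: fsubset_leq_card; apply/fsubsetP => x xB.
    by rewrite in_fset_set; [rewrite inE; exact: Hm|exact: W_fin].
  rewrite -(ler_nat R) => le1 le2.
  have := truncnS_gt (C * c).
  have : ((truncn (C * c)).+1%:R <= (#|` B|)%:R :> R) by rewrite ler_nat.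
  lra.
Qed.
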